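(* Let $\mathcal{C}$ be an $(n,k,d)$ linear MDS code over a finite field $\mathbb{F}_q$, and let $d^\perp = n-d+2$. Then $$\rho(\mathcal{C}) \le \frac{\max\{d^\perp, d-1\}}{n}\binom{n}{d-2}.$$
   Context: An $(n,k,d)$ linear MDS code is a linear code over $\mathbb{F}_q$ of length $n$, dimension $k$ and minimum Hamming distance $d = n-k+1$; its dual is MDS with minimum distance $d^\perp = k+1 = n-d+2$. A parity-check matrix for $\mathcal{C}$ is any matrix (possibly with linearly dependent rows) whose rows span $\mathcal{C}^\perp$. For a parity-check matrix $H$, the stopping distance $s(H)$ is the largest integer such that for every set of $s(H)-1$ or fewer columns of $H$, the projection of $H$ onto those columns contains at least one row with exactly one nonzero entry. The stopping redundancy $\rho(\mathcal{C})$ is the smallest number of rows of a parity-check matrix $H$ for $\mathcal{C}$ with $s(H) = d$. *)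

(* Defs.v *)
From HB Require Import structures.
From mathcomp Require Import all_boot all_order all_algebra.
Set Implicit Arguments. Unset Strict Implicit. Unset Printing Implicit Defensive.
Import GRing.Theory.
Local Open Scope ring_scope.

Section Codes.
Variables (F : finFieldType) (n : nat).

Definition wt (v : 'rV[F]_n) : nat := #|[set i : 'I_n | v 0 i != 0]|.

(* The linear code generated by (the rows of) C is { c | (c <= C)%MS }.
   d is its minimum Hamming distance (= minimum weight of a nonzero codeword). *)
Definition is_min_distance (m : nat) (C : 'M[F]_(m, n)) (d : nat) : Prop :=
  (exists c : 'rV[F]_n, [/\ (c <= C)%MS, c != 0 & wt c = d]) /\
  (forall c : 'rV[F]_n, (c <= C)%MS -> c != 0 -> (d <= wt c)%N).

Definition in_dual (m : nat) (C : 'M[F]_(m, n)) (v : 'rV[F]_n) : Prop :=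
  forall c : 'rV[F]_n, (c <= C)%MS -> c *m v^T = 0.

(* H is a parity-check matrix of C: its rows span C^perp (rows may be dependent) *)
Definition parity_check (m r : nat) (C : 'M[F]_(m, n)) (H : 'M[F]_(r, n)) : Prop :=
  forall v : 'rV[F]_n, (v <= H)%MS <-> in_dual C v.

Definition has_single_row (r : nat) (H : 'M[F]_(r, n)) (S : {set 'I_n}) : Prop :=
  exists j : 'I_r, #|[set i in S | H j i != 0]| = 1%N.

Definition stop_cond (r : nat) (H : 'M[F]_(r, n)) (s : nat) : Prop :=
  forall S : {set 'I_n}, S != set0 -> (#|S| < s)%N -> has_single_row H S.

(* s(H) = s : s is the largest integer satisfying stop_cond (stop_cond is
   antitone in s, so this says exactly that s is the largest such integer) *)
Definition stopping_distance_is (r : nat) (H : 'M[F]_(r, n)) (s : nat) : Prop :=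
  stop_cond H s /\ ~ stop_cond H s.+1.

End Codes.

(* Main.v *)
Require Import Defs.
From HB Require Import structures.
From mathcomp Require Import all_boot all_order all_algebra.
From mathcomp Require Import zify.
Import Order.TTheory GRing.Theory Num.Theory.
Local Open Scope ring_scope.

Lemma extend_set (T : finType) (A U : {set T}) j :
  A \subset U -> (#|A| <= j)%N -> (j <= #|U|)%N ->
  exists B : {set T}, [/\ A \subset B, B \subset U & #|B| = j].
Proof.
move=> sAU; move e: (j - #|A|)%N => t.
elim: t A sAU e => [|t IH] A sAU e hA hU.
  by exists A; split => //; apply/eqP; rewrite eqn_leq hA -subn_eq0 e.
have : ~~ (U \subset A).
  apply/negP => sUA; have := subset_leq_card sUA; lia.
case/subsetPn => x xU xA.
have h1 : x |: A \subset U by rewrite subUset sub1set xU.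
have h2 : (j - #|x |: A|)%N = t by rewrite cardsU1 xA; lia.
have h3 : (#|x |: A| <= j)%N by rewrite cardsU1 xA; lia.
have [B [s1 s2 s3]] := IH (x |: A) h1 h2 h3 hU.

exists B; split => //; apply: subset_trans s1; exact: subsetUr.
Qed.

Lemma cardsD1_in {T : finType} {A : {set T}} {x} : x \in A -> #|A| = #|A :\ x|.+1.
Proof. by rewrite (cardsD1 x A) => ->. Qed.

Lemma card_D1_ge {T : finType} (A : {set T}) x : (#|A| <= #|A :\ x|.+1)%N.
Proof. by rewrite (cardsD1 x A); case: (x \in A). Qed.

Section Dual.
Variables (F : finFieldType) (n m : nat) (C : 'M[F]_(m, n)).
Hypothesis hmin : forall c : 'rV[F]_n, (c <= C)%MS -> c != 0 ->
  (n - \rank C + 1 <= wt c)%N.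

Lemma in_dualE v : in_dual C v <-> C *m v^T = 0.
Proof.
split=> [h|h c /submxP [x ->]]; last by rewrite -mulmxA h mulmx0.
apply/row_matrixP => i; rewrite row_mul row0; apply: h; exact: row_sub.
Qed.

Lemma dualE (v : 'rV[F]_n) : (v <= kermx C^T)%MS = (C *m v^T == 0).
Proof.
apply/sub_kermxP/eqP => h.
  by rewrite -(trmxK (C *m v^T)) trmx_mul trmxK h trmx0.
by rewrite -(trmxK (v *m C^T)) trmx_mul trmxK h trmx0.
Qed.

Definition selmx (K : {set 'I_n}) : 'M[F]_(n, #|K|) :=
  \matrix_(i, j) (i == enum_val j)%:R.

Lemma selmxE (K : {set 'I_n}) (c : 'rV[F]_n) j :
  (c *m selmx K) 0 j = c 0 (enum_val j).
Proof.
rewrite !mxE (bigD1 (enum_val j)) //= mxE eqxx mulr1 big1 ?addr0 //.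
by move=> i /negbTE hi; rewrite mxE hi mulr0.
Qed.

Lemma proj_full (K : {set 'I_n}) : #|K| = \rank C ->
  forall u : 'rV[F]_#|K|, exists2 c : 'rV[F]_n, (c <= C)%MS & forall j, c 0 (enum_val j) = u 0 j.
Proof.
move=> hK u.
have hcap : \rank (C :&: kermx (selmx K)) = 0%N.
  apply/eqP; rewrite mxrank_eq0; apply/rowV0P => v.
  rewrite sub_capmx => /andP[vC /sub_kermxP vK].
  apply/eqP; apply/negP => /negP vn0.
  have := hmin v vC vn0.
  have : (wt v <= #|~: K|)%N.
    apply: subset_leq_card; apply/subsetP => i; rewrite !inE; apply: contraR.
    rewrite negbK => iK.
    by rewrite -(enum_rankK_in iK iK) -selmxE vK mxE.
  have := cardsC K; rewrite card_ord hK.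
  have := rank_leq_col C. lia.
have hr : row_full (C *m selmx K).
  rewrite /row_full; have := mxrank_mul_ker C (selmx K).
  rewrite hcap addn0 => ->; by rewrite hK.
have /submxP [x hx] := submx_full u hr.
exists (x *m C); first exact: submxMl.
by move=> j; rewrite -selmxE -mulmxA -hx.
Qed.

Lemma dual_wt (v : 'rV[F]_n) : C *m v^T = 0 ->
  forall K : {set 'I_n}, (#|K| <= \rank C)%N ->
  (forall i, i \notin K -> v 0 i = 0) -> v = 0.
Proof.
move=> hv K hK hz.
have [K' [s1 _ s3]] := @extend_set _ K setT (\rank C) (subsetT K) hK
   ltac:(by rewrite cardsT card_ord rank_leq_col).
apply/rowP => i; rewrite mxE.
case: (eqVneq (v 0 i) 0) => // vi.
have iK : i \in K'.
  apply: (subsetP s1); apply: contraR vi => /hz ->; by rewrite eqxx.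
pose u : 'rV[F]_#|K'| := \row_j ((j == enum_rank_in iK i)%:R).
have [c cC hc] := @proj_full K' s3 u.
have := (in_dualE v).2 hv c cC.
move/matrixP => /(_ 0 0); rewrite !mxE (bigD1 i) //= big1.
  have ci : c 0 i = 1 by rewrite -(enum_rankK_in iK iK) hc mxE eqxx.
  by rewrite addr0 ci mul1r mxE => ->.
move=> l li; rewrite [v^T _ _]mxE.
case: (boolP (l \in K')) => lK.
  rewrite -(enum_rankK_in iK lK) hc mxE.
  case: eqP => [/(congr1 enum_val)|]; last by rewrite mul0r.
  by rewrite !enum_rankK_in // => e; rewrite e eqxx in li.
have : l \notin K by apply: contra lK; apply: (subsetP s1).
by move/hz ->; rewrite mulr0.
Qed.


Lemma exists_h (T : {set 'I_n}) : (#|T| < n - \rank C)%N ->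
  exists v : 'rV[F]_n, [&& C *m v^T == 0, v != 0 & [forall i in T, v 0 i == 0]].
Proof.
move=> hT.
set D := kermx C^T; set P := kermx (selmx T).
have rD : \rank D = (n - \rank C)%N by rewrite mxrank_ker mxrank_tr.
have rP : (n - #|T| <= \rank P)%N.
  rewrite mxrank_ker; have := rank_leq_col (selmx T); lia.
have rS := mxrank_sum_cap D P; have rDP := rank_leq_col (D + P)%MS.
have : (D :&: P)%MS != 0 by rewrite -mxrank_eq0; lia.
case/rowV0Pn => v; rewrite sub_capmx => /andP[vD /sub_kermxP vP] vn0.
exists v; rewrite -dualE vD vn0 /=; apply/forall_inP => i iT.
by rewrite -(enum_rankK_in iT iT) -selmxE vP mxE.
Qed.

Definition hT (T : {set 'I_n}) : 'rV[F]_n :=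
  odflt 0 [pick v : 'rV[F]_n | [&& C *m v^T == 0, v != 0 & [forall i in T, v 0 i == 0]]].

Lemma hT_dual (T : {set 'I_n}) : C *m (hT T)^T = 0.
Proof.
rewrite /hT; case: pickP => [v /and3P[/eqP -> _ _]|_] //=.
by rewrite trmx0 mulmx0.
Qed.

Lemma hT_prop (T : {set 'I_n}) : (#|T| < n - \rank C)%N ->
  hT T != 0 /\ forall i, i \in T -> hT T 0 i = 0.
Proof.
move=> hc; rewrite /hT; case: pickP => [v /and3P[_ v0 /forall_inP h]|h0] /=.
  by split => // i /h /eqP.
by have [v hv] := exists_h T hc; rewrite h0 in hv.
Qed.

Lemma hT_supp (T : {set 'I_n}) : (#|T|.+1 = n - \rank C)%N -> forall i, i \notin T -> hT T 0 i != 0.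
Proof.
move=> hc i iT; apply/negP => /eqP hi.
have hc' : (#|T| < n - \rank C)%N by rewrite -hc.
have [h0 hz] := hT_prop T hc'.
have : hT T = 0.
  apply: (@dual_wt _ (hT_dual T) (~: (i |: T))).
    have := cardsC (i |: T); rewrite cardsU1 iT card_ord.
    have := rank_leq_col C; lia.
  move=> j; rewrite inE negbK in_setU1 => /orP[/eqP ->|] //; exact: hz.
by move/eqP; rewrite (negbTE h0).
Qed.

Lemma not_stop r (H : 'M[F]_(r, n)) d :
  (H <= kermx C^T)%MS -> is_min_distance C d -> ~ stop_cond H d.+1.
Proof.
move=> HD [[c [cC c0 wc]] _] hs.
pose S := [set i : 'I_n | c 0 i != 0].
have S0 : S != set0.
  apply/set0Pn; apply/existsP; apply: contraR c0 => /existsPn h.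
  apply/eqP/rowP => i; rewrite mxE; apply/eqP; move: (h i); by rewrite inE negbK.
have [j hj] := hs S S0 (ltac:(rewrite -/(wt c) wc; by []) ).
move/eqP/cards1P: hj => [i hi].
have hrow : C *m (row j H)^T = 0.
  apply/eqP; rewrite -dualE; exact: submx_trans (row_sub _ _) HD.
have := (in_dualE (row j H)).2 hrow c cC.
move/matrixP/(_ 0 0); rewrite !mxE (bigD1 i) //= big1.
  rewrite addr0 !mxE.
  have : i \in [set i] by rewrite set11.
  rewrite -hi !inE => /andP[ci hji].
  by move/eqP; rewrite mulf_eq0 (negbTE ci) (negbTE hji).
move=> l li; rewrite !mxE.
case: (eqVneq (c 0 l) 0) => [->|cl]; first by rewrite mul0r.
case: (eqVneq (H j l) 0) => [->|hl]; first by rewrite mulr0.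
have : l \in [set x in S | H j x != 0] by rewrite !inE cl hl.
by rewrite hi inE (negbTE li).
Qed.


Section Construct.
Variables (d : nat) (o : 'I_n).
Hypothesis ed : d = (n - \rank C + 1)%N.
Hypothesis hd2 : (2 <= d)%N.
Hypothesis hk : (0 < \rank C)%N.

Definition fam := [set T : {set 'I_n} | T \subset [set~ o] & #|T| == (d - 2)%N].
Definition Hmx : 'M[F]_(#|fam|, n) := \matrix_(j, x) hT (enum_val j) 0 x.

Lemma row_Hmx j : row j Hmx = hT (enum_val j).
Proof. by apply/rowP => x; rewrite !mxE. Qed.

Lemma Hmx_row T (hTf : T \in fam) : hT T = row (enum_rank_in hTf T) Hmx.
Proof. by rewrite row_Hmx enum_rankK_in. Qed.

Lemma Hmx_dual : (Hmx <= kermx C^T)%MS.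
Proof. by apply/row_subP => j; rewrite row_Hmx dualE hT_dual. Qed.

Lemma card_fam : #|fam| = 'C(n.-1, d - 2).
Proof. by rewrite /fam cards_draws cardsC1 card_ord. Qed.

Lemma rkn : (\rank C <= n)%N.
Proof. exact: rank_leq_col. Qed.

Lemma Hmx_parity : parity_check C Hmx.
Proof.
move=> v; split.
  move=> vH; rewrite in_dualE; apply/eqP; rewrite -dualE.
  exact: submx_trans vH Hmx_dual.
move/in_dualE => hv.
have rk := rkn.
have [Z0 [_ sZ cZ]] := @extend_set _ set0 [set~ o] (d - 1) (sub0set _)
  ltac:(by rewrite cards0) ltac:(rewrite cardsC1 card_ord -subn1; lia).
have Tin l : l \in Z0 -> Z0 :\ l \in fam.
  move=> lZ; have e : #|Z0 :\ l| = (d-2)%N by have := cardsD1 l Z0; rewrite lZ cZ /=; lia.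
  by rewrite inE (subset_trans (subD1set _ _) sZ) e eqxx.
have cT l : l \in Z0 -> (#|Z0 :\ l|.+1 = n - \rank C)%N.
  move=> lZ; have := cardsD1 l Z0; rewrite lZ cZ /=; lia.
pose a l := v 0 l / hT (Z0 :\ l) 0 l.
pose s := \sum_(l in Z0) a l *: hT (Z0 :\ l).
have sH : (s <= Hmx)%MS.
  apply: summx_sub => l lZ; apply: scalemx_sub.
  rewrite (Hmx_row _ (Tin l lZ)); exact: row_sub.
have sD : (s <= kermx C^T)%MS := submx_trans sH Hmx_dual.
have w0 : v - s = 0.
  apply: (@dual_wt _ _ (~: Z0)).
  - apply/eqP; rewrite -dualE addmx_sub //; first by rewrite dualE hv.
    by rewrite (eqmx_opp s).
  - have e : #|~: Z0| = \rank C by have := cardsC Z0; rewrite card_ord cZ; lia.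
    by rewrite e.
  - move=> i; rewrite inE negbK => iZ.
    rewrite !mxE /s summxE (bigD1 i) //= big1 => [|l /andP[lZ li]].
      rewrite mxE /a divfK ?addr0 ?subrr //.
      by apply: hT_supp; [exact: cT | rewrite setD11].
    rewrite mxE (proj2 (hT_prop (Z0 :\ l) _)) ?mulr0 //.
      by rewrite cT.
    by rewrite !inE eq_sym li iZ.
by rewrite (subr0_eq w0).
Qed.

Lemma Hmx_stop : stop_cond Hmx d.
Proof.
move=> S S0 cS.
have rk := rkn.
have [i [iS hi]] : exists i, i \in S /\ (o \in S -> i = o).
  case: (boolP (o \in S)) => oS; first by exists o.
  case/set0Pn: S0 => i iS; exists i; split => // /(negP oS).
pose U1 := [set~ o] :\ i.
have sA : S :\ i \subset U1.
  apply/subsetP => x; rewrite !inE => /andP[xi xS]; rewrite xi /=.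
  apply/negP => /eqP xo; subst x; by rewrite (hi xS) eqxx in xi.
have cA : (#|S :\ i| <= d - 2)%N.
  have cS' : (#|S| < d)%N := cS.
  move: cS'; rewrite (cardsD1_in iS); lia.
have cU : (d - 2 <= #|U1|)%N.
  have h1 := card_D1_ge [set~ o] i; rewrite cardsC1 card_ord in h1.
  have h2 : (d - 2 <= n.-1 - 1)%N by rewrite -subn1; lia.
  apply: (leq_trans h2); rewrite leq_subLR add1n; exact: h1.
have [T [sAT sTU cT]] := extend_set _ _ _ _ sA cA cU.
have Tf : T \in fam.
  by rewrite inE (subset_trans sTU (subD1set _ _)) cT eqxx.
exists (enum_rank_in Tf T); apply/eqP/cards1P; exists i.
apply/setP => x; rewrite !inE mxE enum_rankK_in //.
case: (eqVneq x i) => [->|xi].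
  rewrite iS /=; apply: hT_supp; first by rewrite cT; lia.
  apply/negP => /(subsetP sTU); by rewrite !inE eqxx.
case xS: (x \in S) => //=.
rewrite (proj2 (hT_prop T _)) ?eqxx //; first by rewrite cT; lia.
by apply: (subsetP sAT); rewrite !inE xi xS.
Qed.

End Construct.

End Dual.

Theorem corollary20 (F : finFieldType) (n k d m : nat) (C : 'M[F]_(m, n)) :
  \rank C = k ->
  is_min_distance C d ->
  d = (n - k + 1)%N ->
  exists (r : nat) (H : 'M[F]_(r, n)),
    [/\ parity_check C H, stopping_distance_is H d &
        (r%:R <= (maxn (n - d + 2) (d - 1))%:R / n%:R
                 * (if (2 <= d)%N then 'C(n, d - 2) else 0%N)%:R :> rat)].
Proof.
move=> hk hmd ed; have [[c [cC c0 wc]] hmin'] := hmd.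
have hmin : forall c : 'rV[F]_n, (c <= C)%MS -> c != 0 ->
    (n - \rank C + 1 <= wt c)%N by rewrite hk -ed.
rewrite -hk in ed.
have rk0 : (0 < \rank C)%N.
  rewrite lt0n mxrank_eq0; apply: contra c0 => /eqP C0.
  by rewrite C0 in cC; rewrite (submx0null cC).
have dn : (d <= n)%N by rewrite -wc /wt -[X in (_ <= X)%N](card_ord n) max_card.
have rk := rank_leq_col C.
case: (leqP 2 d) => hd2.
  have n0 : (0 < n)%N by lia.
  pose o : 'I_n := Ordinal n0.
  exists #|fam n d o|, (Hmx F n m C d o); split.
  - exact: (Hmx_parity F n m C hmin d o ed hd2 rk0).
  - split; first exact: (Hmx_stop F n m C hmin d o ed hd2 rk0).
    exact: (not_stop F n m C _ _ d (Hmx_dual F n m C d o) hmd).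
  rewrite card_fam mulrAC ler_pdivlMr ?ltr0n // -!natrM ler_nat.
  rewrite mulnC mul_bin_down leq_mul //.
  by apply: leq_trans (leq_maxl _ _); lia.
exists 0%N, (0 : 'M[F]_(0, n)); split.
- move=> v; split.
    by move/submx0null ->; move=> c' _; rewrite trmx0 mulmx0.
  move/in_dualE => hv.
  have -> : v = 0.
    apply: (@dual_wt _ _ _ C hmin v hv setT); first by rewrite cardsT card_ord; lia.
    by move=> i; rewrite inE.
  exact: sub0mx.
- split.
    move=> S S0 cS; exfalso.
    have : #|S| = 0%N by lia.
    by move/eqP; rewrite cards_eq0 (negbTE S0).
  exact: (not_stop F n m C _ _ d (sub0mx _ _) hmd).
by rewrite mulr0 lexx.
Qed.
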